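(* Let $A\subseteq\Delta^{m-1}\times\Delta^{n-1}$, let $\mathscr T$ be a triangulation of $A$, and let $\mathscr T'$ be the result of a flip on $\mathscr T$ supported on a circuit $X=(X^+,X^-)$. Suppose $\sigma\in\mathscr T$, $\sigma\notin\mathscr T'$, and $G(\sigma)$ is connected. Then $\sigma$ contains an inclusion-maximal element of $\mathscr T_X^+$.
   Context: General conventions. For a finite point set $A\subset\mathbb R^d$: a cell is a subset of $A$; a simplex is an affinely independent cell; a face of a cell $C$ is a subset $F\subseteq C$ which is the set of minimizers on $C$ of some linear functional. A triangulation of $A$ is a collection $\mathscr T$ of simplices of $A$, closed under taking faces, such that for all $\sigma,\sigma'\in\mathscr T$, $\mathrm{conv}(\sigma)\cap\mathrm{conv}(\sigma')=\mathrm{conv}(F)$ for a common face $F$ of $\sigma$ and $\sigma'$, and such that $\bigcup_{\sigma\in\mathscr T}\mathrm{conv}(\sigma)=\mathrm{conv}(A)$. A circuit is a minimal affinely dependent subset $X$; it satisfies an affine dependence $\sum_{x\in X}\lambda_x x=0$, $\sum\lambda_x=0$, all $\lambda_x\neq0$, unique up to scaling, which partitions $X=X^+\cup X^-$ into the points with positive and with negative coefficients; writing $X=(X^+,X^-)$ fixes a choice of sign. Set $\mathscr T_X^+:=\{\sigma\subseteq X:X^+\not\subseteq\sigma\}$ and $\mathscr T_X^-:=\{\sigma\subseteq X:X^-\not\subseteq\sigma\}$. For $C\in\mathscr T$, $\mathrm{link}_{\mathscr T}(C):=\{C'\in\mathscr T: C\cap C'=\emptyset,\ C\cup C'\in\mathscr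 T\}$. A triangulation $\mathscr T$ of $A$ has a flip supported on the circuit $(X^+,X^-)$, $X\subseteq A$, if $\mathscr T_X^+\subseteq\mathscr T$ and all inclusion-maximal elements of $\mathscr T_X^+$ have the same link $\mathscr L$ in $\mathscr T$; the result of the flip is the triangulation $(\mathscr T\setminus\{\rho\cup\sigma:\rho\in\mathscr L,\sigma\in\mathscr T_X^+\})\cup\{\rho\cup\sigma:\rho\in\mathscr L,\sigma\in\mathscr T_X^-\}$. $\Delta^{m-1}\times\Delta^{n-1}:=\{(e_i,f_j):i\in[m],j\in[n]\}\subset\mathbb R^m\times\mathbb R^n$, with $e_i$, $f_j$ the standard basis vectors. Let $K$ be the complete bipartite graph on vertex set $\{e_1,\dots,e_m\}\cup\{f_1,\dots,f_n\}$ with edges $e_if_j$. For $C\subseteq\Delta^{m-1}\times\Delta^{n-1}$, $G(C)$ is the minimal subgraph of $K$ with edge set $\{e_if_j:(e_i,f_j)\in C\}$ (its vertices are the endpoints of these edges). *)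

(* Defs.v *)
From HB Require Import structures.
From mathcomp Require Import all_boot all_order all_algebra.
Set Implicit Arguments. Unset Strict Implicit. Unset Printing Implicit Defensive.
Import Order.TTheory GRing.Theory Num.Theory.
Local Open Scope ring_scope.

Section Defs.
Variables (R : realFieldType) (m n : nat).

(* the point (e_i, f_j) is encoded by the pair (i, j) *)
Definition point := ('I_m * 'I_n)%type.
Definition coordT := ('I_m + 'I_n)%type.

Definition coord (p : point) (k : coordT) : R :=
  match k with inl i => (p.1 == i)%:R | inr j => (p.2 == j)%:R end.

Definition aff_dep (C : {set point}) : Prop :=
  exists lam : point -> R,
    (forall p, p \notin C -> lam p = 0) /\
    (exists2 p, p \in C & lam p != 0) /\
    \sum_(p in C) lam p = 0 /\
    (forall k, \sum_(p in C) lam p * coord p k = 0).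

Definition simplex (C : {set point}) : Prop := ~ aff_dep C.

Definition eval_fun (w : coordT -> R) (p : point) : R :=
  \sum_(k : coordT) w k * coord p k.

(* F is a face of C: the minimizers on C of some linear functional,
   with the usual convention that the empty set is also a face. *)
Definition face (F C : {set point}) : Prop :=
  F \subset C /\
  (F = set0 \/
   exists w : coordT -> R,
     forall p, p \in C -> (p \in F <-> forall q, q \in C -> eval_fun w p <= eval_fun w q)).

Definition in_conv (C : {set point}) (x : coordT -> R) : Prop :=
  exists lam : point -> R,
    (forall p, 0 <= lam p) /\
    (forall p, p \notin C -> lam p = 0) /\
    \sum_(p in C) lam p = 1 /\
    (forall k, x k = \sum_(p in C) lam p * coord p k).

Definition triangulation (A : {set point}) (T : {set {set point}}) : Prop :=
  (forall s, s \in T -> s \subset A /\ simplex s) /\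
  (forall s F, s \in T -> face F s -> F \in T) /\
  (forall s s', s \in T -> s' \in T ->
     exists F, face F s /\ face F s' /\
       (forall x, (in_conv s x /\ in_conv s' x) <-> in_conv F x)) /\
  (forall x, (exists2 s, s \in T & in_conv s x) <-> in_conv A x).

Definition circuit (X : {set point}) : Prop :=
  aff_dep X /\ (forall Y : {set point}, Y \proper X -> ~ aff_dep Y).

Definition signed_circuit (Xp Xm : {set point}) : Prop :=
  circuit (Xp :|: Xm) /\
  exists lam : point -> R,
    (forall p, p \in Xp -> 0 < lam p) /\
    (forall p, p \in Xm -> lam p < 0) /\
    (forall p, p \notin Xp :|: Xm -> lam p = 0) /\
    \sum_(p in Xp :|: Xm) lam p = 0 /\
    (forall k, \sum_(p in Xp :|: Xm) lam p * coord p k = 0).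

Definition TXplus (Xp Xm : {set point}) : {set {set point}} :=
  [set s : {set point} | (s \subset Xp :|: Xm) && ~~ (Xp \subset s)].
Definition TXminus (Xp Xm : {set point}) : {set {set point}} :=
  [set s : {set point} | (s \subset Xp :|: Xm) && ~~ (Xm \subset s)].

Definition link (T : {set {set point}}) (C : {set point}) : {set {set point}} :=
  [set C' in T | [disjoint C & C'] && (C :|: C' \in T)].

Definition flip_result (T L : {set {set point}}) (Xp Xm : {set point}) :=
  (T :\: [set r :|: s | r in L, s in TXplus Xp Xm])
  :|: [set r :|: s | r in L, s in TXminus Xp Xm].

Definition is_flip (A : {set point}) (T T' : {set {set point}}) (Xp Xm : {set point}) : Prop :=
  signed_circuit Xp Xm /\ Xp :|: Xm \subset A /\
  TXplus Xp Xm \subset T /\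
  exists L, (forall s, maxset (fun S => S \in TXplus Xp Xm) s -> link T s = L) /\
            T' = flip_result T L Xp Xm.

Definition Gadj (C : {set point}) : rel coordT :=
  fun u v => match u, v with
             | inl i, inr j => (i, j) \in C
             | inr j, inl i => (i, j) \in C
             | _, _ => false end.

Definition Gvert (C : {set point}) (u : coordT) : bool := [exists v, Gadj C u v].

Definition G_connected (C : {set point}) : Prop :=
  forall u v, Gvert C u -> Gvert C v -> connect (Gadj C) u v.

End Defs.

(* Main.v *)
Require Import Defs.
From HB Require Import structures.
From mathcomp Require Import all_boot all_order all_algebra ring lra.
Set Implicit Arguments. Unset Strict Implicit. Unset Printing Implicit Defensive.
Import Order.TTheory GRing.Theory Num.Theory.
Local Open Scope ring_scope.

Lemma sum_delta (R : realFieldType) (T : finType) (F : T -> R) e :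
  \sum_p (p == e)%:R * F p = F e.
Proof.
rewrite (bigD1 e) //= eqxx mul1r big1 ?addr0 // => p /negbTE ->; by rewrite mul0r.
Qed.

Lemma sum_delta1 (R : realFieldType) (T : finType) (e : T) :
  \sum_p ((p == e)%:R : R) = 1.
Proof.
rewrite (bigD1 e) //= eqxx big1 ?addr0 // => p /negbTE ->; by [].
Qed.

Lemma sum_in_all (R : realFieldType) (T : finType) (D : {set T}) (F : T -> R) :
  (forall p, p \notin D -> F p = 0) -> \sum_(p in D) F p = \sum_p F p.
Proof.
move=> H; rewrite [RHS](bigID (fun p => p \in D)) /= [X in _ + X]big1 ?addr0 //.
Qed.

Lemma neg_in (R : realFieldType) (T : finType) (X : {set T}) (F : T -> R) y :
  \sum_(p in X) F p = 0 -> y \in X -> 0 < F y -> exists2 p, p \in X & F p < 0.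
Proof.
move=> s0 yX Fy.
case: (pickP (fun p => (p \in X) && (F p < 0))) => [p /andP [] | H]; first by exists p.
have h : 0 <= \sum_(p in X | p != y) F p.
  apply: sumr_ge0 => p /andP [pX _]; move: (H p); rewrite pX /= => /negbT.
  by rewrite leNgt.
move: s0; rewrite (bigD1 y) //=; lra.
Qed.

Definition rho (R : realFieldType) m n (u : coordT m n) : R := if u is inl _ then 1 else 0.
Definition sgv (R : realFieldType) m n (u : coordT m n) : R := if u is inl _ then 1 else -1.
Definition chi (R : realFieldType) m n (u k : coordT m n) : R := (u == k)%:R.

Lemma eq_ll m n (i a : 'I_m) : (inl i == inl a :> coordT m n) = (i == a). Proof. by []. Qed.
Lemma eq_rr m n (i a : 'I_n) : (inr i == inr a :> coordT m n) = (i == a). Proof. by []. Qed.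
Lemma eq_lr m n (i : 'I_m) (a : 'I_n) : (inl i == inr a :> coordT m n) = false. Proof. by []. Qed.
Lemma eq_rl m n (i : 'I_m) (a : 'I_n) : (inr a == inl i :> coordT m n) = false. Proof. by []. Qed.

Lemma edge_vec (R : realFieldType) m n (C : {set point m n}) (u w : coordT m n) :
  Gadj C u w -> exists e : point m n, exists c : R, e \in C /\
    c = rho R u - rho R w /\
    forall k, c * Defs.coord R e k = sgv R u * chi R u k - sgv R w * chi R w k.
Proof.
  case: u w => [i|j] [i'|j'] //= H.
  - exists (i, j'), 1; split => //; split; first by rewrite /rho subr0.
    by case=> [a|b]; rewrite /Defs.coord /chi /sgv /=; rewrite ?eq_ll ?eq_rr ?eq_lr ?eq_rl; case: eqP => _ /=; ring.
  - exists (i', j), (-1); split => //; split; first by rewrite /rho sub0r.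
    by case=> [a|b]; rewrite /Defs.coord /chi /sgv /=; rewrite ?eq_ll ?eq_rr ?eq_lr ?eq_rl; case: eqP => _ /=; ring.
Qed.

Lemma walk_dep (R : realFieldType) m n (C : {set point m n}) (u v : coordT m n) :
  connect (Gadj C) u v ->
  exists f : point m n -> R, (forall p, p \notin C -> f p = 0) /\
    \sum_p f p = rho R u - rho R v /\
    forall k, \sum_p f p * Defs.coord R p k = sgv R u * chi R u k - sgv R v * chi R v k.
Proof.
case/connectP => ws0; elim: ws0 u => [|w ws IH] u /=.
  move=> _ ->; exists (fun _ => 0); split=> //; split.
    by rewrite big1 // subrr.
  by move=> k; rewrite big1 ?subrr // => p; rewrite mul0r.
case/andP => uw pw lv.
have [f [fC [fs fk]]] := IH w pw lv.
have [e [c [eC [cs ck]]]] := edge_vec R uw.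
exists (fun p => (p == e)%:R * c + f p); split.
  move=> p pC; rewrite fC //; have /negbTE -> : p != e.
    by apply: contraNneq pC => ->.
  by rewrite mul0r add0r.
split.
  by rewrite big_split /= sum_delta fs cs; ring.
move=> k.
under eq_bigr => p _ do rewrite mulrDl -mulrA.
by rewrite big_split /= sum_delta (ck k) fk; ring.
Qed.
Lemma coord_pt (R : realFieldType) m n (y : point m n) k :
  Defs.coord R y k = sgv R (inl y.1 : coordT m n) * chi R (inl y.1) k
                    - sgv R (inr y.2 : coordT m n) * chi R (inr y.2) k.
Proof.
case: y => i j; case: k => [a|b]; rewrite /Defs.coord /chi /sgv /=;
  rewrite ?eq_ll ?eq_rr ?eq_lr ?eq_rl; case: eqP => _ /=; ring.
Qed.

Lemma endpoint (R : realFieldType) m n (Xp Xm S : {set point m n}) (lam : point m n -> R) y k :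
  (forall p, p \in Xp -> 0 < lam p) ->
  (forall p, p \notin Xp :|: Xm -> lam p = 0) ->
  \sum_(p in Xp :|: Xm) lam p * Defs.coord R p k = 0 ->
  Xm \subset S -> y \in Xp -> Defs.coord R y k = 1 ->
  exists2 p, p \in S & Defs.coord R p k = 1.
Proof.
move=> lamP lam0 sk XmS yXp yk.
have yX : y \in Xp :|: Xm by rewrite inE yXp.
have ypos : 0 < lam y * Defs.coord R y k by rewrite yk mulr1 lamP.
have [p pX pneg] := neg_in sk yX ypos.
exists p.
  apply: (subsetP XmS); move: pX; rewrite inE => /orP [pXp|//].
  have := lamP p pXp; move: pneg.
  have : Defs.coord R p k = 0 \/ Defs.coord R p k = 1.
    by case: k {sk yk ypos} => [a|b] /=; case: eqP; auto.
  by case=> ->; [rewrite mulr0 | rewrite mulr1]; lra.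
move: pneg; case: k {sk yk ypos} => [a|b] /=; case: eqP => //= _; rewrite mulr0; lra.
Qed.

Theorem proposition6p1 (R : realFieldType) (m n : nat)
    (A : {set point m n}) (T T' : {set {set point m n}})
    (Xp Xm : {set point m n}) (s : {set point m n}) :
  triangulation R A T ->
  is_flip R A T T' Xp Xm ->
  s \in T -> s \notin T' ->
  G_connected s ->
  exists t : {set point m n},
    maxset (fun S => S \in TXplus Xp Xm) t /\ t \subset s.
Proof.
move=> [Tall _] [[_ [lam [lamP [lamN [lam0 [_ lamk]]]]]] [_ [TXT [L [HL ->]]]]] sT nT' Gc.
have sP : s \in [set r :|: s0 | r in L, s0 in TXplus Xp Xm].
  by apply: contraNT nT' => H; rewrite in_setU in_setD H sT.
have nQ : s \notin [set r :|: s0 | r in L, s0 in TXminus Xp Xm].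
  by apply: contra nT' => H; rewrite in_setU H orbT.
case/imset2P: sP => r sig rL sigTX sE.
move: sigTX; rewrite inE => /andP [sigX nXp].
have XmS : Xm \subset sig.
  apply: contraR nQ => H; apply/imset2P; exists r sig => //; by rewrite inE sigX H.
have [x xXp xsig] : exists2 x, x \in Xp & x \notin sig by apply/subsetPn.
set t := (Xp :|: Xm) :\ x.
have tmax : maxset (fun S => S \in TXplus Xp Xm) t.
  apply/maxsetP; split.
    rewrite inE subD1set /=; apply/subsetPn; exists x => //; by rewrite !inE eqxx.
  move=> B; rewrite inE => /andP [BX nXpB] tB; apply/eqP; rewrite eqEsubset tB andbT.
  apply/subsetP => p pB; rewrite in_setD1 (subsetP BX) // andbT.
  apply: contra nXpB => /eqP px; apply/subsetP => q qXp.
  case: (q =P x) => [->|/eqP qx]; first by rewrite -px.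
  by apply: (subsetP tB); rewrite !inE qx qXp.
have sigt : sig \subset t.
  apply/subsetP => p psig; rewrite in_setD1 (subsetP sigX) // andbT.
  by apply: contraNneq xsig => <-.
exists t; split => //.
rewrite sE; apply: subset_trans (subsetUr r sig); apply/subsetP => y.
rewrite !inE => /andP [yx /orP [yXp|yXm]]; last by apply: (subsetP XmS).
apply/negPn/negP => ysig.
move: rL; rewrite -(HL t tmax) inE => /and3P [rT dis tr].
have yt : y \in t by rewrite !inE yx yXp.
have yr : y \notin r by rewrite (disjointFr dis yt).
have ys : y \notin s by rewrite sE inE negb_or yr.
have [_ simp] := Tall _ tr.
apply: simp.
have sub : s \subset t :|: r.
  by rewrite sE setUC; apply: setSU.
have v1 : Gvert s (inl y.1 : coordT m n).
  have XmS' : Xm \subset s by rewrite sE; apply: subset_trans XmS (subsetUr _ _).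
  have yk : Defs.coord R y (inl y.1) = 1 by rewrite /Defs.coord /= eqxx.
  have [p ps pk] := endpoint lamP lam0 (lamk (inl y.1)) XmS' yXp yk.
  apply/existsP; exists (inr p.2); move: pk ps; rewrite /Defs.coord /=.
  case: eqP => [<- _|_]; first by case: p.
  by move/eqP; rewrite eq_sym oner_eq0.
have v2 : Gvert s (inr y.2 : coordT m n).
  have XmS' : Xm \subset s by rewrite sE; apply: subset_trans XmS (subsetUr _ _).
  have yk : Defs.coord R y (inr y.2) = 1 by rewrite /Defs.coord /= eqxx.
  have [p ps pk] := endpoint lamP lam0 (lamk (inr y.2)) XmS' yXp yk.
  apply/existsP; exists (inl p.1); move: pk ps; rewrite /Defs.coord /=.
  case: eqP => [<- _|_]; first by case: p.
  by move/eqP; rewrite eq_sym oner_eq0.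
have [f [fC [fs fk]]] := walk_dep R (Gc _ _ v1 v2).
have fy : f y = 0 by apply: fC.
have supp : forall p, p \notin t :|: r -> f p - (p == y)%:R = 0.
  move=> p pD; rewrite fC; last by apply: contra pD; apply: (subsetP sub).
  have /negbTE -> : p != y by apply: contraNneq pD => ->; rewrite inE yt.
  by rewrite subrr.
exists (fun p => f p - (p == y)%:R); split => //; split.
  exists y; first by rewrite inE yt.
  by rewrite fy eqxx sub0r oppr_eq0 oner_eq0.
split.
  rewrite sum_in_all // sumrB fs sum_delta1 /rho /=; ring.
move=> k; rewrite sum_in_all; last by move=> p /supp ->; rewrite mul0r.
under eq_bigr => p _ do rewrite mulrBl.
rewrite sumrB fk sum_delta coord_pt /=; ring.
Qed.
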